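(* Let $S=K[x_1,\ldots,x_n]$ and $A\subseteq sm(S)_2$. Then (1) $A$ is upper perfect if and only if $\omega(\overline{\tau(A)})\le 2$, where $\overline{\tau(A)}$ is the complement graph of $\tau(A)$ and $\omega$ denotes the clique number; (2) $A$ is lower perfect if and only if for each $i\in[n]$, the degree of $v_i$ in $\overline{\tau(A)}$ is less than $n-1$.
   Context: $K$ is a field and $sm(S)_d$ is the set of square-free monomials of degree $d$ in $S$. For $A\subseteq sm(S)_2$: $A$ is upper perfect if $\{gx_i\mid g\in A,\ x_i\nmid g\}=sm(S)_3$, and lower perfect if $\{h\ne 1\mid h=g/x_i \text{ for some } g\in A,\ x_i\mid g\}=sm(S)_1$. $\tau(A)$ is the graph with vertex set $\{v_1,\ldots,v_n\}$ in which $v_iv_j$ is an edge if and only if $x_ix_j\in A$. *)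

(* Defs.v *)
From mathcomp Require Import all_boot.
Set Implicit Arguments. Unset Strict Implicit. Unset Printing Implicit Defensive.

(* Square-free monomials of S = K[x_1,...,x_n] are encoded by their supports:
   the square-free monomial x_{i_1}...x_{i_d} (i_1 < ... < i_d) is the set
   {i_1,...,i_d} : {set 'I_n}.  Variables x_1..x_n are indexed by 'I_n.
   Under this encoding: deg = cardinality, x_i | g <-> i \in g,
   g * x_i <-> g :|: [set i], g / x_i <-> g :\ i, and 1 <-> set0. *)

Definition sm (n d : nat) : {set {set 'I_n}} := [set g : {set 'I_n} | #|g| == d].

Definition upper_perfect (n : nat) (A : {set {set 'I_n}}) : Prop :=
  [set g :|: [set i] | g in A, i in ~: g] = sm n 3.

Definition lower_perfect (n : nat) (A : {set {set 'I_n}}) : Prop :=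
  [set h in [set g :\ i | g in A, i in g] | h != set0] = sm n 1.

Definition tau (n : nat) (A : {set {set 'I_n}}) : rel 'I_n :=
  fun i j => (i != j) && ([set i; j] \in A).

Definition compl_graph (n : nat) (G : rel 'I_n) : rel 'I_n :=
  fun i j => (i != j) && ~~ G i j.

Definition is_clique (n : nat) (G : rel 'I_n) (C : {set 'I_n}) : bool :=
  [forall i in C, forall j in C, (i != j) ==> G i j].

Definition clique_number (n : nat) (G : rel 'I_n) : nat :=
  \max_(C : {set 'I_n} | is_clique G C) #|C|.

Definition degree (n : nat) (G : rel 'I_n) (i : 'I_n) : nat :=
  #|[set j | G i j]|.

(* Main.v *)
Require Import Defs.
From mathcomp Require Import all_boot.

Lemma clique_iff n (A : {set {set 'I_n}}) C :
  is_clique (compl_graph (tau A)) C =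
  [forall i in C, forall j in C, (i != j) ==> ([set i; j] \notin A)].
Proof.
apply/forallP/forallP => H i; apply/implyP => iC;
  have /implyP/(_ iC)/forallP H1 := H i;
  apply/forallP => j; apply/implyP => jC; have /implyP/(_ jC)/implyP H2 := H1 j;
  apply/implyP => ij; have := H2 ij; rewrite /compl_graph /tau ij /=; by [].
Qed.

Lemma part1 n (A : {set {set 'I_n}}) :
  A \subset sm n 2 ->
  (upper_perfect A <-> clique_number (compl_graph (tau A)) <= 2).
Proof.
move=> /subsetP As2; rewrite /upper_perfect /clique_number; split.
- move=> HU; apply/bigmax_leqP => C; rewrite clique_iff => /forallP Hc.
  rewrite leqNgt; apply/negP => C3.
  have [a aC] : exists a, a \in C by apply/set0Pn; rewrite -card_gt0; case: #|C| C3.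
  have C3a : 1 < #|C :\ a| by move: C3; rewrite (cardsD1 a) aC.
  have [b bC] : exists b, b \in C :\ a by apply/set0Pn; rewrite -card_gt0; case: #|C :\ a| C3a.
  have C3b : 0 < #|C :\ a :\ b| by move: C3a; rewrite (cardsD1 b) bC.
  have [c cC] : exists c, c \in C :\ a :\ b by apply/set0Pn; rewrite -card_gt0.
  move: bC cC; rewrite !in_setD1 => /andP [ba bC] /and3P [cb ca cC].
  have T3 : a |: (b |: [set c]) \in sm n 3.
    rewrite inE cardsU1 cardsU1 cards1 !in_setU1 !in_set1.
    by rewrite [a == b]eq_sym [a == c]eq_sym (negbTE ba) (negbTE ca) [b == c]eq_sym cb.
  rewrite -HU in T3; case/imset2P: T3 => g i gA _ Tg.
  have gT : g \subset C.
    apply/subsetP => x xg; have : x \in g :|: [set i] by rewrite inE xg.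
    by rewrite -Tg !inE => /or3P [] /eqP ->.
  have := As2 g gA; rewrite inE => /cards2P [x [y [xy gxy]]].
  have xC : x \in C by apply: (subsetP gT); rewrite gxy !inE eqxx.
  have yC : y \in C by apply: (subsetP gT); rewrite gxy !inE eqxx orbT.
  have := Hc x; rewrite xC => /forallP/(_ y); rewrite yC xy /=.
  by rewrite -gxy gA.
- move=> /bigmax_leqP Hcl; apply/eqP; rewrite eqEsubset; apply/andP; split.
    apply/subsetP => T /imset2P [g i gA]; rewrite inE => ig ->.
    have := As2 g gA; rewrite !inE => /eqP g2.
    by rewrite setUC cardsU1 g2 ig.
  apply/subsetP => T; rewrite inE => /eqP T3.
  have : ~~ is_clique (compl_graph (tau A)) T.
    by apply/negP => /Hcl; rewrite T3.
  rewrite clique_iff negb_forall => /existsP [x]; rewrite negb_imply => /andP [xT].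
  rewrite negb_forall => /existsP [y]; rewrite negb_imply => /andP [yT].
  rewrite negb_imply negbK => /andP [xy gA].
  set g := [set x; y] in gA.
  have gT : g \subset T by apply/subsetP => z; rewrite !inE => /orP [] /eqP ->.
  have g2 : #|g| = 2 by rewrite cards2 xy.
  have [i iT] : exists i, i \in T :\: g.
    apply/set0Pn; rewrite -card_gt0 cardsD (setIidPr gT) T3 g2 //.
  move: iT; rewrite inE => /andP [ig iT].
  have <- : g :|: [set i] = T.
    apply/eqP; rewrite eqEcard; apply/andP; split.
      by rewrite subUset gT sub1set.
    by rewrite setUC cardsU1 g2 ig T3.
  by apply/imset2P; exists g i; rewrite // inE.
Qed.

Lemma deg_iff n (A : {set {set 'I_n}}) j :
  (degree (compl_graph (tau A)) j < n - 1) <-> exists k, j != k /\ [set j; k] \in A.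
Proof.
rewrite /degree /compl_graph /tau; split.
- move=> H; suff : [exists k, (j != k) && ([set j; k] \in A)].
    by case/existsP => k /andP [? ?]; exists k.
  move: H; apply: contraLR; rewrite negb_exists => /forallP Hn.
  have -> : [set k | (j != k) && ~~ ((j != k) && ([set j; k] \in A))] = [set~ j].
    apply/setP => k; rewrite !inE eq_sym; case: eqP => //= /eqP jk.
    by move: (Hn k); rewrite eq_sym jk.
  by rewrite cardsC1 card_ord subn1 ltnn.
- case=> k [jk Ak].
  have sub : [set k0 | (j != k0) && ~~ ((j != k0) && ([set j; k0] \in A))] \subset [set~ j] :\ k.
    apply/subsetP => x; rewrite !inE; case: eqP => //= /eqP jx.
    move=> H; rewrite [x == j]eq_sym jx andbT; apply/eqP => xk; move: H; by rewrite xk Ak.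
  apply: (leq_ltn_trans (subset_leq_card sub)).
  have := cardsD1 k [set~ j]; rewrite cardsC1 card_ord !inE eq_sym jk /= => e.
  by rewrite subn1 e add1n ltnSn.
Qed.

Lemma setD2 n (j k : 'I_n) : j != k -> [set j; k] :\ k = [set j].
Proof.
move=> jk; apply/setP => x; rewrite !inE.
by case: (x =P j) => [-> |] /=; [rewrite jk | move=> _; case: (x =P k)].
Qed.

Lemma lower_iff n (A : {set {set 'I_n}}) :
  A \subset sm n 2 ->
  (lower_perfect A <-> forall j, exists k, j != k /\ [set j; k] \in A).
Proof.
move=> /subsetP As2; rewrite /lower_perfect; split.
- move=> HL j.
  have : [set j] \in sm n 1 by rewrite inE cards1.
  rewrite -HL inE => /andP [/imset2P [g i gA ig e] _].
  have jg : j \in g :\ i by rewrite -e inE.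
  exists i; split; first by move: jg; rewrite !inE => /andP [].
  suff -> : [set j; i] = g by []. by rewrite -(setD1K ig) -e setUC.
- move=> H; apply/eqP; rewrite eqEsubset; apply/andP; split.
    apply/subsetP => h; rewrite inE => /andP [/imset2P [g i gA ig ->] _].
    have := As2 g gA; rewrite !inE (cardsD1 i) ig add1n => /eqP [->] //.
  apply/subsetP => h; rewrite /sm inE => h1; have [j ->] : exists j, h = [set j] by apply/cards1P.
  have [k [jk Ak]] := H j.
  rewrite inE -(@setD2 _ _ _ jk) andbC.
  rewrite (_ : _ != set0 = true); last first.
    by rewrite (@setD2 _ _ _ jk); apply/set0Pn; exists j; rewrite inE.
  by apply/imset2P; exists [set j; k] k; rewrite // !inE eqxx orbT.
Qed.

Theorem proposition4p3 (n : nat) (A : {set {set 'I_n}}) :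
  A \subset sm n 2 ->
  (upper_perfect A <-> clique_number (compl_graph (tau A)) <= 2) /\
  (lower_perfect A <-> forall i : 'I_n, degree (compl_graph (tau A)) i < n - 1).
Proof.
move=> As2; split; first exact: part1.
have L := @lower_iff n A As2; split.
  by move=> /L H i; apply/(@deg_iff n A i).
by move=> H; apply/L => i; apply/(@deg_iff n A i).
Qed.
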